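(* Let $L,R\in\mathrm{SL}_2(\mathbb{N}_0)$ be such that $(L,R)$ is a left-right pair. Then every tree (connected component) of the graph $\mathcal{F}(L,R)$ is rooted, i.e. it contains a vertex of indegree $0$. Equivalently, no vertex $z\in\mathcal{D}_0$ has infinitely many ancestors in $\mathcal{F}(L,R)$.
   Context: $\mathbb{N}_0=\{0,1,2,\dots\}$ and $\mathrm{SL}_2(\mathbb{N}_0)$ is the set of $2\times 2$ matrices $\begin{pmatrix} a & b\\ c & d\end{pmatrix}$ with $a,b,c,d\in\mathbb{N}_0$ and $ad-bc=1$; such a matrix $T$ acts on $\overline{\mathbb{C}}=\mathbb{C}\cup\{\infty\}$ by $T(z)=\frac{az+b}{cz+d}$. Let $\mathcal{D}_0=\{x+iy : x>0,\ y>0\}$; every $T\in\mathrm{SL}_2(\mathbb{N}_0)$ satisfies $T(\mathcal{D}_0)\subseteq\mathcal{D}_0$. A pair $(L,R)$ in $\mathrm{SL}_2(\mathbb{N}_0)$ is a left-right pair if $L(\mathcal{D}_0)\cap R(\mathcal{D}_0)=\emptyset$. The directed graph $\mathcal{F}(L,R)$ has vertex set $\mathcal{D}_0$ and edge set $\{(z,L(z)) : z\in\mathcal{D}_0\}\cup\{(z,R(z)) : z\in\mathcal{D}_0\}$. When $(L,R)$ is a left-right pair, it is known that $\mathcal{F}(L,R)$ is a disjoint union of infinite binary trees, each of which is either rooted (every vertex has outdegree 2, exactly one vertex has indegree 0 and all others have indegree 1) or rootless (every vertex has outdegree 2 and indegree 1). A vertex $w$ is an ancestor of $z$ if there is a directed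 path from $w$ to $z$ in $\mathcal{F}(L,R)$. *)

(* Defs.v *)
(* complex numbers x + i y are represented as pairs (x, y) of reals. *)
From Stdlib Require Import Reals Relations List.
Open Scope R_scope.

Record SL2N0 := mkSL2 {
  ma : nat; mb : nat; mc : nat; md : nat;
  mdet : (ma * md = mb * mc + 1)%nat }.

Definition D0 (z : R * R) : Prop := 0 < fst z /\ 0 < snd z.

(* Moebius action T(z) = (a z + b) / (c z + d), written out in real and
   imaginary parts: for z = x + i y,
   (a z + b)/(c z + d) = ((a x + b)(c x + d) + a c y^2 + i (ad-bc) y) / |c z + d|^2 *)
Definition act (T : SL2N0) (z : R * R) : R * R :=
  let a := INR (ma T) in let b := INR (mb T) in
  let c := INR (mc T) in let d := INR (md T) in
  let x := fst z in let y := snd z in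
  let den := (c * x + d) ^ 2 + (c * y) ^ 2 in
  (((a * x + b) * (c * x + d) + a * c * y ^ 2) / den,
   ((a * d - b * c) * y) / den).

Definition left_right_pair (L Rm : SL2N0) : Prop :=
  forall z w, D0 z -> D0 w -> act L z <> act Rm w.

Definition edge (L Rm : SL2N0) (u v : R * R) : Prop :=
  D0 u /\ (v = act L u \/ v = act Rm u).

Definition ancestor (L Rm : SL2N0) (w z : R * R) : Prop :=
  clos_refl_trans (R * R) (edge L Rm) w z.

Definition indeg0 (L Rm : SL2N0) (w : R * R) : Prop :=
  ~ exists u, edge L Rm u w.

(* Main.v *)
Require Import Defs.
From Stdlib Require Import Reals Relations List.
From Stdlib Require Import Lia Lra Psatz Classical.
From Coquelicot Require Import Coquelicot.
Open Scope R_scope.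

Definition mob (T : SL2N0) (w : C) : C :=
  Cdiv (Cplus (Cmult (RtoC (INR (ma T))) w) (RtoC (INR (mb T))))
       (Cplus (Cmult (RtoC (INR (mc T))) w) (RtoC (INR (md T)))).

Lemma det_R (T : SL2N0) : INR (ma T) * INR (md T) = INR (mb T) * INR (mc T) + 1.
Proof. rewrite <- !mult_INR, <- S_INR, mdet. f_equal; lia. Qed.

Lemma ad_pos (T : SL2N0) : (1 <= ma T /\ 1 <= md T)%nat.
Proof. pose proof (mdet T). destruct (ma T), (md T); lia. Qed.

Lemma den_pos (T : SL2N0) (w : R*R) : D0 w ->
  0 < INR (mc T) * fst w + INR (md T).
Proof. intros [Hx Hy]. pose proof (ad_pos T). pose proof (pos_INR (mc T)).
  assert (1 <= INR (md T)) by (apply (le_INR 1); lia). nra. Qed.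

Lemma act_mob (T : SL2N0) (w : R*R) : D0 w -> act T w = mob T w.
Proof. intros H. pose proof (den_pos T w H). destruct w as [x y].
  unfold act, mob, Cdiv, Cmult, Cplus, Cinv, RtoC; simpl in *.
  assert (0 < (INR (mc T) * x + INR (md T))^2 + (INR (mc T) * y)^2) by nra.
  pose proof (det_R T).
  f_equal; field; nra. Qed.

Lemma act_D0 (T : SL2N0) (w : R*R) : D0 w -> D0 (act T w).
Proof. intros H. pose proof (den_pos T w H). pose proof (det_R T).
  destruct H as [Hx Hy]. destruct w as [x y]; unfold act, D0; simpl in *.
  pose proof (pos_INR (ma T)). pose proof (pos_INR (mb T)). pose proof (pos_INR (mc T)).
  assert (0 < (INR (mc T) * x + INR (md T))^2 + (INR (mc T) * y)^2) by nra.
  split; apply Rdiv_lt_0_compat; try nra.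
  pose proof (ad_pos T) as [Ha _]. apply (le_INR 1) in Ha. simpl in Ha.
  assert (0 < INR (ma T) * x + INR (mb T)) by nra.
  assert (0 <= INR (ma T) * INR (mc T) * (y * (y * 1))).
  { apply Rmult_le_pos; [nra|nra]. }
  nra. Qed.

Lemma mul_det (a b c d p q r s : nat) :
  (a * d = b * c + 1)%nat -> (p * s = q * r + 1)%nat ->
  ((a*p + b*r) * (c*q + d*s) = (a*q + b*s) * (c*p + d*r) + 1)%nat.
Proof. intros H1 H2.
  assert (E : ((a*p + b*r) * (c*q + d*s) = (a*d)*(p*s) + b*c*q*r + a*p*c*q + b*r*d*s)%nat) by ring.
  assert (F : ((a*q + b*s) * (c*p + d*r) = (a*d)*(q*r) + b*c*(p*s) + a*p*c*q + b*r*d*s)%nat) by ring.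
  rewrite E, F, H1, H2. ring. Qed.

Definition mul (M T : SL2N0) : SL2N0 :=
  mkSL2 _ _ _ _ (mul_det (ma M) (mb M) (mc M) (md M) (ma T) (mb T) (mc T) (md T) (mdet M) (mdet T)).

Definition idM : SL2N0 := mkSL2 1 0 0 1 eq_refl.

Lemma act_id w : D0 w -> act idM w = w.
Proof. intros H. rewrite act_mob by auto. destruct w as [x y].
  unfold mob; simpl. apply injective_projections; simpl; field. Qed.

Lemma Cnz (T : SL2N0) w : D0 w -> Cplus (Cmult (RtoC (INR (mc T))) w) (RtoC (INR (md T))) <> RtoC 0.
Proof. intros H E. pose proof (den_pos T w H). apply (f_equal fst) in E.
  destruct w; simpl in *. lra. Qed.

Lemma act_mul M T w : D0 w -> act (mul M T) w = act M (act T w).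
Proof. intros H. pose proof (act_D0 T w H) as H'.
  rewrite (act_mob M) by auto. rewrite (act_mob T) by auto. rewrite act_mob by auto.
  rewrite (act_mob T) in H' by auto.
  pose proof (Cnz M _ H'). pose proof (Cnz T _ H).
  unfold mob in *. simpl. rewrite !plus_INR, !mult_INR.
  rewrite !RtoC_plus, !RtoC_mult.
  match goal with |- ?l = ?r => change (@eq C l r) end. field. split; auto.
  intro E. apply H0.
  match goal with |- ?l = _ => match type of E with ?X = _ =>
    assert (Hq : l = Cdiv X (Cplus (Cmult (RtoC (INR (mc T))) w) (RtoC (INR (md T))))) by (field; auto) end end.
  rewrite Hq, E. field. auto.
Qed.

Definition invm (a b c d : nat) (z : C) : C :=
  Cdiv (Cminus (Cmult (RtoC (INR d)) z) (RtoC (INR b)))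
       (Cminus (RtoC (INR a)) (Cmult (RtoC (INR c)) z)).

Lemma Caux (w u : C) : u <> RtoC 0 -> w = Cdiv (Cmult w (Cdiv (RtoC 1) u)) (Cdiv (RtoC 1) u).
Proof. intros. field. auto. Qed.

Lemma act_inv M w : D0 w -> w = invm (ma M) (mb M) (mc M) (md M) (act M w).
Proof. intros H. rewrite act_mob by auto. pose proof (Cnz M w H) as Hu.
  assert (Hd : Cminus (Cmult (RtoC (INR (ma M))) (RtoC (INR (md M))))
                      (Cmult (RtoC (INR (mb M))) (RtoC (INR (mc M)))) = RtoC 1).
  { rewrite <- !RtoC_mult, <- RtoC_minus, det_R. f_equal. ring. }
  unfold invm, mob.
  set (u := Cplus (Cmult (RtoC (INR (mc M))) w) (RtoC (INR (md M)))) in *.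
  assert (E1 : Cminus (RtoC (INR (ma M))) (Cmult (RtoC (INR (mc M)))
     (Cdiv (Cplus (Cmult (RtoC (INR (ma M))) w) (RtoC (INR (mb M)))) u)) =
     Cdiv (Cminus (Cmult (RtoC (INR (ma M))) (RtoC (INR (md M))))
                      (Cmult (RtoC (INR (mb M))) (RtoC (INR (mc M))))) u).
  { unfold u in *. field. auto. }
  assert (E2 : Cminus (Cmult (RtoC (INR (md M)))
     (Cdiv (Cplus (Cmult (RtoC (INR (ma M))) w) (RtoC (INR (mb M)))) u)) (RtoC (INR (mb M))) =
     Cmult w (Cdiv (Cminus (Cmult (RtoC (INR (ma M))) (RtoC (INR (md M))))
                      (Cmult (RtoC (INR (mb M))) (RtoC (INR (mc M))))) u)).
  { unfold u in *. field. auto. }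
  rewrite E1, E2, Hd. apply Caux. auto.
Qed.

Lemma bound_M M w N : D0 w -> (1 <= N)%nat -> fst (act M w) <= INR N ->
  1 <= INR N * snd (act M w) ->
  (ma M <= N*N*N+1 /\ mb M <= N*N*N+1 /\ mc M <= N*N*N+1 /\ md M <= N*N*N+1)%nat.
Proof.
  intros HD HN HX HY. pose proof (den_pos M w HD) as Hp. pose proof (det_R M) as Hdet.
  pose proof (ad_pos M) as [Ha1 Hd1]. pose proof (mdet M) as Hdn.
  destruct HD as [Hx Hy]. destruct w as [x y]. unfold act in *; cbn [fst snd] in *.
  set (a := INR (ma M)) in *. set (b := INR (mb M)) in *.
  set (c := INR (mc M)) in *. set (d := INR (md M)) in *.
  assert (ha : 1 <= a) by (apply (le_INR 1); lia).
  assert (hd : 1 <= d) by (apply (le_INR 1); lia).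
  assert (hb : 0 <= b) by apply pos_INR. assert (hc : 0 <= c) by apply pos_INR.
  set (den := (c * x + d) ^ 2 + (c * y) ^ 2) in *.
  assert (Hden : 0 < den) by (unfold den; nra).
  set (X := ((a * x + b) * (c * x + d) + a * c * y ^ 2) / den) in *.
  set (Y := (a * d - b * c) * y / den) in *.
  assert (EY : Y * den = y) by (unfold Y; replace (a*d-b*c) with 1 by lra; field; lra).
  assert (EX : X * den = (a * x + b) * (c * x + d) + a * c * y ^ 2) by (unfold X; field; lra).
  assert (H2 : 2 * c * d * y <= den).
  { unfold den. assert (0 <= c * x) by nra. assert (d*d <= (c*x+d)^2) by nra.
    pose proof (pow2_ge_0 (d - c*y)). nra. }
  assert (H1 : 2 * c * d * Y <= 1).
  { assert (0 <= c * d) by nra.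
    assert (2 * c * d * Y * den <= 1 * den) by nra. nra. }
  assert (HNpos : 1 <= INR N) by (apply (le_INR 1); lia).
  assert (HYpos : 0 < Y) by (unfold Y; replace (a*d-b*c) with 1 by lra; apply Rdiv_lt_0_compat; lra).
  assert (Hcd : c * d <= INR N).
  { assert (0 <= c * d) by nra. assert (c*d*1 <= c*d*(INR N * Y)) by (apply Rmult_le_compat_l; lra).
    assert (c*d*(INR N*Y) = INR N * (c*d*Y)) by ring. nra. }
  assert (Hb : b <= d * X).
  { assert ((d * X - b) * den = (c*x+d)*x + c*y^2).
    { replace ((d * X - b) * den) with (d * (X * den) - b * den) by ring.
      rewrite EX. unfold den. replace (c*x+d) with (c*x+d) by ring.
      transitivity ((c * x + d) * x * (a*d - b*c) + c * y ^ 2 * (a*d-b*c)); [ring|].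
      rewrite Hdet. ring. }
    assert (0 <= (c*x+d)*x + c*y^2) by nra. nra. }
  assert (HX0 : 0 <= X).
  { assert (0 <= a*c*y^2) by (assert (0 <= a*c) by nra; pose proof (pow2_ge_0 y); nra).
    assert (0 < (a * x + b) * (c * x + d)) by (apply Rmult_lt_0_compat; nra). nra. }
  unfold a, b, c, d in *.
  rewrite <- mult_INR in Hcd. apply INR_le in Hcd.
  assert (HdN : (md M <= N)%nat).
  { destruct (mc M) eqn:Ec. { nia. } nia. }
  apply le_INR in HdN.
  assert (HbN : INR (mb M) <= INR N * INR N).
  { apply (Rle_trans _ _ _ Hb). apply Rmult_le_compat; lra. }
  rewrite <- mult_INR in HbN. apply INR_le in HbN. apply INR_le in HdN.
  nia.
Qed.

Definition msum (M : SL2N0) : nat := (ma M + mb M + mc M + md M)%nat.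

Lemma msum_mul M T : ~ (ma T = 1 /\ mb T = 0 /\ mc T = 0 /\ md T = 1)%nat ->
  (msum M + 1 <= msum (mul M T))%nat.
Proof. intros Hn. unfold msum, mul; simpl.
  pose proof (ad_pos M) as [Ha Hd]. pose proof (ad_pos T) as [Hp Hs].
  pose proof (mdet T).
  assert (ma T >= 2 \/ mb T >= 1 \/ mc T >= 1 \/ md T >= 2)%nat by lia.
  destruct H0 as [H0|[H0|[H0|H0]]]; nia. Qed.

Lemma act_idlike T w : D0 w -> (ma T = 1 /\ mb T = 0 /\ mc T = 0 /\ md T = 1)%nat -> act T w = w.
Proof. intros H [E1 [E2 [E3 E4]]]. transitivity (act idM w); [|apply act_id; auto]. unfold act.
  rewrite E1, E2, E3, E4. reflexivity. Qed.

Lemma nonid L Rm T : left_right_pair L Rm -> (T = L \/ T = Rm) ->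
  ~ (ma T = 1 /\ mb T = 0 /\ mc T = 0 /\ md T = 1)%nat.
Proof. intros Hlr HT Hid. assert (H1 : D0 (1,1)) by (split; simpl; lra).
  destruct HT; subst.
  - apply (Hlr (act Rm (1,1)) (1,1)); auto using act_D0. apply act_idlike; auto using act_D0.
  - apply (Hlr (1,1) (act L (1,1))); auto using act_D0. symmetry. apply act_idlike; auto using act_D0.
Qed.

Lemma anc_mat L Rm w z : ancestor L Rm w z -> D0 z -> D0 w /\ exists M, z = act M w.
Proof. unfold ancestor. intros H. apply clos_rt_rt1n in H. induction H; intros Hz.
  - split; auto. exists idM. symmetry. apply act_id; auto.
  - destruct (IHclos_refl_trans_1n Hz) as [Hy [M HM]]. destruct H as [Hx Hor].
    split; auto. destruct Hor as [E|E]; subst y.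
    + exists (mul M L). rewrite act_mul; auto.
    + exists (mul M Rm). rewrite act_mul; auto.
Qed.

Theorem theorem1p2 (L Rm : SL2N0) :
  left_right_pair L Rm ->
  forall z : R * R, D0 z ->
    (exists w, D0 w /\ indeg0 L Rm w /\ ancestor L Rm w z) /\
    (exists l : list (R * R), forall w, ancestor L Rm w z -> In w l).
Proof.
  intros Hlr z Hz.
  destruct (INR_archimed 1 (fst z + / snd z + 1)) as [N HN]; [lra|].
  destruct Hz as [Hz1 Hz2].
  assert (Hiv : 0 < / snd z) by (apply Rinv_0_lt_compat; auto).
  assert (HN1 : (1 <= N)%nat).
  { destruct N; [simpl in HN; lra | lia]. }
  assert (HX : fst z <= INR N) by lra.
  assert (HY : 1 <= INR N * snd z).
  { assert (/ snd z * snd z = 1) by (field; lra). nra. }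
  set (B := (N*N*N+1)%nat).
  assert (Hb : forall w M, D0 w -> z = act M w ->
     (ma M <= B /\ mb M <= B /\ mc M <= B /\ md M <= B)%nat).
  { intros w M Hw E. subst z. exact (bound_M M w N Hw HN1 HX HY). }
  assert (HzD : D0 z) by (split; auto).
  split.
  - assert (Hind : forall n w M, (4*B - msum M <= n)%nat -> ancestor L Rm w z -> D0 w ->
       z = act M w -> exists r, D0 r /\ indeg0 L Rm r /\ ancestor L Rm r z).
    { induction n; intros w M Hn Ha Hw E;
      (destruct (classic (exists u, edge L Rm u w)) as [[u [Hu Hor]] | Hno];
       [| exists w; auto]);
      (assert (HT : exists T, (T = L \/ T = Rm) /\ w = act T u)
         by (destruct Hor; eauto));
      destruct HT as [T [HT Ew]];
      pose proof (msum_mul M T (nonid L Rm T Hlr HT)) as Hs;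
      assert (E' : z = act (mul M T) u) by (rewrite act_mul; congruence);
      pose proof (Hb u (mul M T) Hu E') as Hbb;
      unfold msum in *.
      - lia.
      - apply (IHn u (mul M T)); auto.
        + unfold msum. lia.
        + unfold ancestor in *. eapply rt_trans; [apply rt_step; split; eauto | exact Ha]. }
    apply (Hind (4*B)%nat z idM); auto.
    + lia.
    + apply rt_refl.
    + symmetry. apply act_id; auto.
  - exists (flat_map (fun a => flat_map (fun b => flat_map (fun c =>
       map (fun d => invm a b c d z) (seq 0 (S B))) (seq 0 (S B))) (seq 0 (S B))) (seq 0 (S B))).
    intros w Ha. destruct (anc_mat L Rm w z Ha HzD) as [Hw [M E]].
    destruct (Hb w M Hw E) as [h1 [h2 [h3 h4]]].
    apply in_flat_map. exists (ma M). split; [apply in_seq; lia|].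
    apply in_flat_map. exists (mb M). split; [apply in_seq; lia|].
    apply in_flat_map. exists (mc M). split; [apply in_seq; lia|].
    apply in_map_iff. exists (md M). split; [|apply in_seq; lia].
    rewrite E. symmetry. apply act_inv; auto.
Qed.
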